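(* In the multi-agent combinatorial-actions contract model (described in the context) with an XOS reward function $f$ and $n$ agents, for any contract $\boldsymbol{\alpha}^\star$ and any pure Nash equilibrium $S^\star$ of $\boldsymbol{\alpha}^\star$, there exists an equal-pay contract $\boldsymbol{\alpha}$ and a pure Nash equilibrium $S$ of $\boldsymbol{\alpha}$ such that $$\Big(1-\sum_{i\in A}\alpha_i\Big)f(S)\ \ge\ \Omega\!\left(\frac{\log\log n}{\log n}\right)\Big(1-\sum_{i\in A}\alpha^\star_i\Big)f(S^\star).$$
   Context: Model: principal and agents $A=[n]$; each agent $i$ has a finite action set $T_i$ (pairwise disjoint), $T=\bigsqcup_iT_i$, costs $c_j\ge0$, $c(S_i)=\sum_{j\in S_i}c_j$. Reward $f:2^T\to[0,1]$ monotone, $f(\emptyset)=0$; $f$ is XOS if $f(S)=\max_{\ell\in\mathcal{L}}\ell(S)$ for a finite family $\mathcal{L}$ of additive functions. Contract $\boldsymbol{\alpha}\in[0,1]^A$; agent $i$'s utility $\alpha_if(S)-c(S\cap T_i)$; $S$ is a pure Nash equilibrium of $\boldsymbol{\alpha}$ if no agent can gain by changing her own subset of actions. A contract is equal-pay if all its nonzero entries are equal. The $\Omega(\cdot)$ hides a universal constant. *)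

(* Defs.v *)
From HB Require Import structures.
From mathcomp Require Import all_boot all_order all_algebra.
From mathcomp Require Import all_classical all_reals.
From mathcomp Require Import exp.
Set Implicit Arguments. Unset Strict Implicit. Unset Printing Implicit Defensive.
Import Order.TTheory GRing.Theory Num.Theory.
Local Open Scope ring_scope.

Section Model.
Variables (R : realType) (n : nat) (T : finType).
(* own j = the agent owning action j; T_i = [set j | own j == i] *)
Variable own : T -> 'I_n.
Variable c : T -> R.
Variable f : {set T} -> R.

Definition actions_of (i : 'I_n) : {set T} := [set j | own j == i].

Definition cost (S : {set T}) : R := \sum_(j in S) c j.

(* XOS: f is the max of a finite, nonempty family of (nonnegative) additive
   functions l(S) = \sum_{j in S} w j. *)
Definition additive_fn (w : T -> R) (S : {set T}) : R := \sum_(j in S) w j.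

Definition is_XOS : Prop :=
  exists L : seq (T -> R),
    [/\ L != [::],
        (forall w, w \in L -> forall j, 0 <= w j),
        (forall w, w \in L -> forall S, additive_fn w S <= f S) &
        (forall S, exists2 w, w \in L & additive_fn w S = f S)].

Definition valid_reward : Prop :=
  [/\ f (finset.set0 : {set T}) = 0,
      (forall S : {set T}, 0 <= f S <= 1),
      (forall S S' : {set T}, S \subset S' -> f S <= f S') & is_XOS].

Definition is_contract (a : 'I_n -> R) : Prop := forall i, 0 <= a i <= 1.

Definition equal_pay (a : 'I_n -> R) : Prop :=
  forall i k, a i != 0 -> a k != 0 -> a i = a k.

Definition agent_util (a : 'I_n -> R) (i : 'I_n) (S : {set T}) : R :=
  a i * f S - cost (S :&: actions_of i).

Definition pure_NE (a : 'I_n -> R) (S : {set T}) : Prop :=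
  forall i (S' : {set T}), S' \subset actions_of i ->
    agent_util a i ((S :\: actions_of i) :|: S') <= agent_util a i S.

Definition principal_util (a : 'I_n -> R) (S : {set T}) : R :=
  (1 - \sum_i a i) * f S.

End Model.

(* Main.v *)
Require Import Defs.
From HB Require Import structures.
From mathcomp Require Import all_boot all_order all_algebra.
From mathcomp Require Import all_classical all_reals.
From mathcomp Require Import exp.
From mathcomp Require Import ring lra.
Import Order.TTheory GRing.Theory Num.Theory.
Local Open Scope ring_scope.
Import finset.
Lemma exists_sub_card (T : finType) (A : {set T}) (k : nat) :
  (k <= #|A|)%N -> exists2 B : {set T}, B \subset A & #|B| = k.
Proof.
elim: k => [|k IH] hk.
  by exists finset.set0; rewrite ?finset.sub0set ?cards0.
have [B sBA cB] := IH (ltnW hk).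
have : (0 < #|A :\: B|)%N.
  by rewrite cardsD (finset.setIidPr sBA) cB subn_gt0.
move=> /card_gt0P [x]; rewrite inE => /andP [xB xA].
exists (x |: B); first by rewrite finset.subUset finset.sub1set xA sBA.
by rewrite cardsU1 xB cB.
Qed.
Arguments exists_sub_card {T A k}.

Lemma comb_lemma (R : realType) (n : nat) (a l : 'I_n -> R) (P : {set 'I_n})
    (L J : nat) :
  (0 < L)%N -> (n <= L ^ J)%N ->
  (forall i, 0 <= a i) -> (forall i, 0 <= l i) -> \sum_i a i <= 1 ->
  (forall i, i \in P -> 2 * a i <= 1) ->
  exists K : {set 'I_n}, exists k : nat,
    [/\ K \subset P, (0 < k)%N, (#|K| <= k)%N,
     (forall i, i \in K -> 2 * k%:R * a i <= 1) &
     \sum_(i in P) l i <= (J + 2 * L + 2)%N%:R * \sum_(i in K) l i].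
Proof.
move=> L0 nLJ a0 l0 sa1 aP.
set W := \sum_(i in P) l i.
set D : R := (J + 2 * L + 2)%N%:R.
have D0 : 0 < D by rewrite ltr0n addn2.
have W0 : 0 <= W by rewrite sumr_ge0.
case: (leP W 0) => [Wle|Wpos].
  exists finset.set0, 1%N; split.
  - exact: finset.sub0set.
  - by [].
  - by rewrite cards0.
  - by move=> i; rewrite finset.in_set0.
  - by rewrite big_set0 mulr0.
apply: contrapT => Hno.
set t := W / D.
have t0 : 0 < t by rewrite divr_gt0.
have HK : forall (K : {set 'I_n}) (k : nat), K \subset P -> (0 < k)%N ->
    (#|K| <= k)%N -> (forall i, i \in K -> 2 * k%:R * a i <= 1) ->
    \sum_(i in K) l i < t.
  move=> K k KP k0 Kk Ka; rewrite ltr_pdivlMr // mulrC ltNge; apply/negP => H.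
  by apply: Hno; exists K, k; split.
pose k s := (L ^ s)%N.
have k0 s : (0 < k s)%N by rewrite expn_gt0 L0.
have k0R s : 0 < (k s)%:R :> R by rewrite ltr0n.
pose H s := [set i in P | (2 * (k s)%:R * a i <= 1) && (t < (k s)%:R * l i)].
have HP s : H s \subset P by apply/fintype.subsetP => i; rewrite inE => /andP [].
have Hs s : \sum_(i in H s) l i < t.
  case: (leqP #|H s| (k s)) => hc.
    apply: HK hc _ => // i; rewrite inE => /andP [_ /andP [-> _]] //.
  have [B sBH cB] := exists_sub_card (ltnW hc).
  have Hlt : \sum_(i in B) l i < t.
    apply: HK (k0 s) _ _.
    - exact: fintype.subset_trans sBH (HP s).
    - by rewrite cB.
    - by move=> i iB; have := fintype.subsetP sBH i iB; rewrite inE => /andP [_ /andP [-> _]].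
  have Hge : t <= \sum_(i in B) l i.
    have -> : t = \sum_(i in B) (t / (k s)%:R).
      rewrite sumr_const cB -(mulr_natr (t / _)) divfK //; exact: lt0r_neq0.
    apply: ler_sum => i iB; have := fintype.subsetP sBH i iB.
    rewrite inE => /andP [_ /andP [_ h]].
    by rewrite ler_pdivrMr // mulrC ltW.
  by move: Hlt; rewrite ltNge Hge.
have point : forall i, i \in P ->
    l i <= t / (k J)%:R + \sum_(s < J.+1) (if i \in H s then l i else 0)
           + 2 * L%:R * t * a i.
  move=> i iP.
  have X0 : 0 <= \sum_(s < J.+1) (if i \in H s then l i else 0).
    by apply: sumr_ge0 => s _; case: ifP.
  have tk0 : 0 <= t / (k J)%:R by rewrite divr_ge0 // ltW.
  have ta0 : 0 <= 2 * L%:R * t * a i.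
    apply: mulr_ge0; last exact: a0.
    by apply: mulr_ge0; [apply: mulr_ge0 | exact: ltW].
  case: (boolP (t < (k J)%:R * l i)) => hJ; last first.
    have : l i <= t / (k J)%:R by rewrite ler_pdivlMr // mulrC leNgt.
    lra.
  case: (boolP [exists s : 'I_J.+1, i \in H s]) => [/existsP [s hs] | hn].
    have : l i <= \sum_(s < J.+1) (if i \in H s then l i else 0).
      rewrite (bigD1 s) //= hs lerDl; apply: sumr_ge0 => j _; case: ifP => //.
    lra.
  have ex : exists s, t < (k s)%:R * l i by exists J.
  case: (ex_minnP ex) => s0 ps0 mins0.
  have s0J : (s0 < J.+1)%N by rewrite ltnS; apply: mins0.
  have nH : i \notin H s0.
    by apply/negP => hh; move/negP: hn; apply; apply/existsP; exists (Ordinal s0J).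
  have na : ~~ (2 * (k s0)%:R * a i <= 1).
    by move: nH; rewrite inE iP ps0 andbT.
  case: s0 ps0 mins0 s0J nH na => [|s'] ps0 mins0 s0J nH na.
    by move: na; rewrite /k expn0 mulr1 aP.
  have ns' : ~~ (t < (k s')%:R * l i).
    by apply/negP => h; have := mins0 _ h; rewrite ltnn.
  have h1 : (k s')%:R * l i <= t by rewrite leNgt.
  have h2 : 1 < 2 * L%:R * (k s')%:R * a i.
    by move: na; rewrite -ltNge /k expnS natrM !mulrA.
  have li0 := l0 i.
  have ai0 := a0 i.
  have L0R : 0 <= L%:R :> R by [].
  have : l i <= 2 * L%:R * t * a i.
    have e1 : l i <= l i * (2 * L%:R * (k s')%:R * a i).
      by rewrite ler_peMr // ltW.
    have e2 : l i * (2 * L%:R * (k s')%:R * a i) =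
              2 * L%:R * a i * ((k s')%:R * l i) by ring.
    have e3 : 2 * L%:R * a i * ((k s')%:R * l i) <= 2 * L%:R * a i * t.
      apply: ler_wpM2l h1; apply: mulr_ge0 => //; exact: mulr_ge0.
    lra.
  lra.
have Wle : W <= \sum_(i in P) (t / (k J)%:R
      + \sum_(s < J.+1) (if i \in H s then l i else 0) + 2 * L%:R * t * a i).
  by apply: ler_sum => i iP; exact: point.
rewrite !big_split /= in Wle.
have T1 : \sum_(i in P) t / (k J)%:R <= t.
  rewrite sumr_const -(mulr_natl (t / _)) mulrA ler_pdivrMr // mulrC.
  apply: ler_wpM2l; first exact: ltW.
  rewrite ler_nat; apply: leq_trans nLJ.
  by apply: leq_trans (max_card _) _; rewrite card_ord.
have T2 : \sum_(i in P) \sum_(s < J.+1) (if i \in H s then l i else 0)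
    = \sum_(s < J.+1) \sum_(i in H s) l i.
  rewrite exchange_big; apply: eq_bigr => s _.
  rewrite -big_mkcondr; apply: eq_bigl => i.
  by rewrite andb_idl // => /(fintype.subsetP (HP s)).
have T3 : \sum_(s < J.+1) \sum_(i in H s) l i < \sum_(s < J.+1) t.
  apply: ltr_sum => [|s _]; last exact: Hs.
  by apply/hasP; exists ord0; rewrite ?mem_index_enum.
rewrite sumr_const card_ord in T3.
have T4 : \sum_(i in P) 2 * L%:R * t * a i <= 2 * L%:R * t.
  rewrite -mulr_sumr; rewrite -[X in _ <= X]mulr1; apply: ler_wpM2l.
    by apply: mulr_ge0; [apply: mulr_ge0 | exact: ltW].
  apply: le_trans sa1.
  rewrite [X in _ <= X](bigID (mem P)) /= lerDl.
  by apply: sumr_ge0 => i _.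
have E1 : t *+ J.+1 = t * J%:R + t by rewrite mulrSr mulr_natr.
have tD : t * D = W by rewrite /t divfK // lt0r_neq0.
have DE : D = J%:R + 2 * L%:R + 2.
  by rewrite /D !natrD; ring.
rewrite DE in tD.
lra.
Qed.
Local Notation expR := sequences.expR.
Lemma asym_bound (R : realType) : exists N : nat, forall n : nat, (N <= n)%N ->
  exists L J : nat, [/\ (0 < L)%N, (n <= L ^ J)%N,
    0 < ln (ln (n%:R : R)) / ln (n%:R : R) &
    (J + 2 * L + 2)%N%:R * (ln (ln (n%:R : R)) / ln (n%:R : R)) <= 5].
Proof.
exists (Num.trunc (expR ((10:R) ^+ 4))).+1 => n hn.
have hnR : expR ((10:R) ^+ 4) < n%:R.
  have := truncnS_gt (expR ((10:R) ^+ 4)).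
  move=> h; apply: (lt_le_trans h); by rewrite ler_nat.
have n0 : 0 < n%:R :> R by apply: lt_trans hnR; exact: expR_gt0.
set x := ln (n%:R : R).
have hx : (10:R) ^+ 4 < x.
  rewrite ltNge; apply/negP => hle.
  have : expR x <= expR ((10:R)^+4) by rewrite ler_expR.
  by rewrite /x lnK ?posrE // leNgt hnR.
have x0 : 0 < x by apply: lt_trans hx; rewrite exprn_gt0.
set u := Num.sqrt (Num.sqrt x).
have u0 : 0 <= u by exact: sqrtr_ge0.
have xu : x = u ^+ 4.
  have -> : (4 = 2 * 2)%N by [].
  by rewrite exprM /u !sqr_sqrtr // ?sqrtr_ge0 // ltW.
have u10 : 10 < u.
  by rewrite -(ltr_pXn2r (_ : (0 < 4)%N)) ?nnegrE // -xu.
set L := Num.trunc (u ^+ 2).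
have [Lle Lgt] : L%:R <= u ^+ 2 /\ u ^+ 2 < L.+1%:R.
  by apply/andP; apply: trunc_itv; rewrite exprn_ge0.
have LgeU : u <= L%:R.
  have h : 10 * 9 <= u * (u - 1) by apply: ler_pM; lra.
  move: Lgt; rewrite -natr1 expr2; lra.
have L0 : (0 < L)%N by rewrite -(ltr0n R); lra.
set lu := ln u.
have lu0 : 0 < lu by apply: ln_gt0; lra.
have luu : lu < u by apply: ln_sublinear; lra.
have lnL : lu <= ln (L%:R : R).
  by rewrite /lu ler_ln ?posrE //; lra.
have lnx : ln x = 4 * lu by rewrite xu lnXn ?mulr_natl //; lra.
set J := (Num.trunc (x / ln (L%:R : R))).+1.
have lnL0 : 0 < ln (L%:R : R) by lra.
have [Jle Jgt] : (J%:R - 1 <= x / ln (L%:R : R)) /\ (x / ln (L%:R : R) < J%:R).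
  have h : 0 <= x / ln (L%:R : R) by rewrite divr_ge0 //; lra.
  have := trunc_itv h; move=> /andP [h1 h2]; split; last exact: h2.
  by rewrite /J -natr1 addrK.
exists L, J; split => //.
- have hJ : x < J%:R * ln (L%:R : R) by rewrite -ltr_pdivrMr.
  have hlt : x < ln ((L ^ J)%N%:R : R).
    by rewrite natrX lnXn ?ltr0n // -(mulr_natl (ln (L%:R : R)) J).
  rewrite leqNgt; apply/negP => hlt2.
  have : ln ((L ^ J)%N%:R : R) <= x.
    have hle : ((L ^ J)%N%:R : R) <= n%:R by rewrite ler_nat ltnW.
    have n0N : (0 < n)%N by rewrite -(ltr0n R).
    by rewrite /x ler_ln ?posrE ?ltr0n ?expn_gt0 ?L0 ?n0N.
  lra.
- by rewrite lnx divr_gt0 //; lra.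
- rewrite lnx mulrA ler_pdivrMr //.
  have DE : ((J + 2 * L + 2)%N%:R : R) = J%:R + 2 * L%:R + 2.
    by rewrite !natrD; ring.
  rewrite DE.
  set v := u ^+ 3.
  have xv : x = v * u by rewrite xu /v exprSr.
  have v0 : 0 <= v by rewrite exprn_ge0.
  have u2 : 10 * 10 <= u ^+ 2 by rewrite expr2; apply: ler_pM; lra.
  have hv : 100 * u <= v by rewrite /v exprSr; apply: ler_pM; lra.
  have hvu : v * 2 <= v * (u - 8) by apply: ler_wpM2l => //; lra.
  have h1 : L%:R * lu <= v.
    by rewrite /v exprSr; apply: ler_pM => //; lra.
  have J1 : 1 <= J%:R :> R by rewrite ler1n.
  have h2 : J%:R * lu <= x + lu.
    have a1 : (J%:R - 1) * ln (L%:R : R) <= x by rewrite -ler_pdivlMr.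
    have a2 : (J%:R - 1) * lu <= (J%:R - 1) * ln (L%:R : R).
      by apply: ler_wpM2l => //; lra.
    lra.
  lra.
Qed.
Definition eqc (R : realType) (n : nat) (K : {set 'I_n}) (b : R) : 'I_n -> R :=
  fun i => if i \in K then b else 0.
Arguments eqc {R n} K b.

Lemma cost_ge0 (R : realType) (T : finType) (c : T -> R) (S : {set T}) :
  (forall j, 0 <= c j) -> 0 <= cost c S.
Proof. by move=> c0; rewrite /cost sumr_ge0. Qed.

Lemma cost_split (R : realType) (T : finType) (c : T -> R) (S B : {set T}) :
  cost c S = cost c (S :&: B) + cost c (S :\: B).
Proof. by rewrite /cost (big_setID B). Qed.
Arguments cost_split {R T} c S B.

Lemma principal_eqc (R : realType) (n : nat) (T : finType) (f : {set T} -> R)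
   (K : {set 'I_n}) (b : R) (S : {set T}) :
  principal_util f (eqc K b) S = (1 - #|K|%:R * b) * f S.
Proof.
rewrite /principal_util /eqc; congr ((1 - _) * _).
by rewrite -big_mkcond /= sumr_const mulr_natl.
Qed.

Lemma pot_NE (R : realType) (n : nat) (T : finType) (own : T -> 'I_n)
  (c : T -> R) (f : {set T} -> R) (K : {set 'I_n}) (b : R) :
  0 <= b <= 1 -> (forall j, 0 <= c j) ->
  exists S : {set T}, [/\ S \subset [set j | own j \in K],
     (forall X : {set T}, X \subset [set j | own j \in K] ->
        b * f X - cost c X <= b * f S - cost c S),
     is_contract (eqc K b), equal_pay (eqc K b) &
     pure_NE own c f (eqc K b) S].
Proof.
move=> /andP [b0 b1] c0.
set D := [set j | own j \in K].
pose Phi (S : {set T}) := b * f S - cost c S.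
case: (@arg_maxP _ _ _ finset.set0 (fun S => S \subset D) Phi (finset.sub0set D)).
move=> S SD Smax.
exists S; split.
- exact: SD.
- by move=> X XD; have := Smax X XD.
- by move=> i; rewrite /eqc; case: ifP => _; apply/andP; split.
- by move=> i k; rewrite /eqc; case: ifP => _; case: ifP => _ //; rewrite eqxx.
move=> i S' S'sub; rewrite /agent_util.
set Ti := actions_of own i.
set S2 := (S :\: Ti) :|: S'.
have S'T j : j \in S' -> own j == i.
  by move=> /(fintype.subsetP S'sub); rewrite inE.
have E1 : S2 :&: Ti = S'.
  apply/setP => j; rewrite !inE; move: (S'T j).
  by case: (j \in S'); case: (j \in S); case: (own j == i) => // /(_ isT).
have E2 : S2 :\: Ti = S :\: Ti.
  apply/setP => j; rewrite !inE; move: (S'T j).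
  by case: (j \in S'); case: (j \in S); case: (own j == i) => // /(_ isT).
rewrite E1 /eqc.
case iK : (i \in K).
  have S2D : S2 \subset D.
    apply/fintype.subsetP => j; rewrite !inE => /orP [/andP [_ jS] | jS'].
      by have := fintype.subsetP SD j jS; rewrite inE.
    have := fintype.subsetP S'sub j jS'; rewrite inE => /eqP ->.
    by rewrite iK.
  have := Smax S2 S2D; rewrite /Phi.
  rewrite (cost_split c S2 Ti) (cost_split c S Ti) E1 E2.
  move=> h; rewrite /Order.ge /= in h; lra.
have Si : S :&: Ti = finset.set0.
  apply/setP => j; rewrite !inE; apply/negP => /andP [jS /eqP ji].
  by have := fintype.subsetP SD j jS; rewrite inE ji iK.
rewrite Si /cost big_set0 !mul0r sub0r subr0 oppr_le0.
exact: sumr_ge0.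
Qed.

Lemma part_sum (R : realType) (n : nat) (T : finType) (own : T -> 'I_n)
    (g : T -> R) (S : {set T}) (K : {set 'I_n}) :
  \sum_(i in K) \sum_(j in S :&: actions_of own i) g j =
  \sum_(j in S :&: [set j | own j \in K]) g j.
Proof.
rewrite [RHS](partition_big own (mem K)) /=; last by move=> j; rewrite !inE => /andP [].
apply: eq_bigr => i iK; apply: eq_bigl => j; rewrite !inE.
by case: (j \in S) => //=; case: (own j =P i) => [->|_]; rewrite ?iK ?andbF.
Qed.

Lemma part_sum_all (R : realType) (n : nat) (T : finType) (own : T -> 'I_n)
    (g : T -> R) (S : {set T}) :
  \sum_i \sum_(j in S :&: actions_of own i) g j = \sum_(j in S) g j.
Proof.
rewrite [RHS](partition_big own predT) //=.
apply: eq_bigr => i _; apply: eq_bigl => j; rewrite !inE.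
by [].
Qed.
Theorem theorem5p3 (R : realType) :
  exists2 C : R, 0 < C &
  exists N : nat, forall (n : nat), (N <= n)%N ->
  forall (T : finType) (own : T -> 'I_n) (c : T -> R) (f : {set T} -> R),
    (forall j, 0 <= c j) ->
    valid_reward f ->
  forall (astar : 'I_n -> R) (Sstar : {set T}),
    is_contract astar -> pure_NE own c f astar Sstar ->
  exists (a : 'I_n -> R) (S : {set T}),
    [/\ is_contract a, equal_pay a, pure_NE own c f a S &
        principal_util f a S >=
          C * (ln (ln (n%:R)) / ln (n%:R)) * principal_util f astar Sstar].
Proof.
exists (1 / 240); first by rewrite divr_gt0.
have [N HN] := asym_bound R.
exists N => n hn T own c f c0 [f0 f01 fmono [Lw [_ Lpos Lle Latt]]] astar Sstar hc hNE.
have [L [J [L0 nLJ rho0 Drho]]] := HN n hn.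
set rho := ln (ln (n%:R : R)) / ln (n%:R : R) in rho0 Drho *.
have Crho0 : 0 <= 1 / 240 * rho by apply: mulr_ge0; [rewrite divr_ge0 | exact: ltW].
set A := \sum_i astar i.
set F := f Sstar.
have -> : principal_util f astar Sstar = (1 - A) * F by [].
have a0 i : 0 <= astar i by have /andP [] := hc i.
have a1 i : astar i <= 1 by have /andP [] := hc i.
have A0 : 0 <= A by rewrite sumr_ge0.
have F0 : 0 <= F by have /andP [] := f01 Sstar.
case: (lerP ((1 - A) * F) 0) => hpos.
  exists (fun _ => 0), finset.set0; split.
  - by move=> i; rewrite lexx ler01.
  - by move=> i k; rewrite eqxx.
  - move=> i S' _; rewrite /agent_util !mul0r !sub0r finset.set0I /cost big_set0 oppr0 oppr_le0.
    exact: sumr_ge0.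
  - rewrite /principal_util f0 mulr0.
    exact: (mulr_ge0_le0 Crho0 hpos).
have Fpos : 0 < F.
  rewrite lt_neqAle F0 andbT; apply/negP => /eqP F00.
  by move: hpos; rewrite -F00 mulr0 ltxx.
have dpos : 0 < 1 - A by move: hpos; rewrite pmulr_lgt0.
have A1 : A <= 1 by lra.
have [w wL wF] := Latt Sstar.
rewrite -/F in wF.
have w0 := Lpos w wL.
have wle := Lle w wL.
pose l i := additive_fn w (Sstar :&: actions_of own i).
have l0 i : 0 <= l i by rewrite /l /additive_fn sumr_ge0.
have lsum : \sum_i l i = F by rewrite -wF /l /additive_fn part_sum_all.
have lK (K : {set 'I_n}) :
    \sum_(i in K) l i = additive_fn w (Sstar :&: [set j | own j \in K]).
  by rewrite /l /additive_fn part_sum.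
have cK (K : {set 'I_n}) : \sum_(i in K) cost c (Sstar :&: actions_of own i)
    = cost c (Sstar :&: [set j | own j \in K]).
  by rewrite /cost part_sum.
have cs0 : cost c finset.set0 = 0 by rewrite /cost big_set0.
have ci i : cost c (Sstar :&: actions_of own i) <= astar i * l i.
  have := hNE i finset.set0 (finset.sub0set _).
  rewrite /agent_util finset.setU0.
  have -> : (Sstar :\: actions_of own i) :&: actions_of own i = finset.set0.
    by apply/setP => j; rewrite !inE; case: (own j == i); rewrite /= ?andbF.
  rewrite cs0 subr0 => h.
  have hf : F - l i <= f (Sstar :\: actions_of own i).
    apply: le_trans (wle _).
    rewrite -wF /l /additive_fn (big_setID (actions_of own i)) /=.
    by rewrite addrC addrK.
  have : astar i * (F - l i) <= astar i * f (Sstar :\: actions_of own i).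
    by apply: ler_wpM2l.
  rewrite -/F in h.
  lra.
set Lt := [set i | 2 * astar i <= 1].
set W := \sum_(i in Lt) l i.
have aP : forall i, i \in Lt -> 2 * astar i <= 1 by move=> i; rewrite inE.
case: (lerP ((1 - A) * F) (4 * W)) => hW.
  have [K [k [KL k0 Kk Ka Wle]]] :=
    @comb_lemma R n astar l Lt L J L0 nLJ a0 l0 A1 aP.
  set kk := (k%:R : R).
  have kk1 : 1 <= kk by rewrite ler1n.
  have kk0 : kk != 0 by rewrite gt_eqF //; lra.
  set b := 3 / (4 * kk).
  have b0 : 0 <= b by rewrite /b divr_ge0 //; lra.
  have kb : kk * b = 3 / 4 by rewrite /b; field.
  have b01 : 0 <= b <= 1.
    apply/andP; split => //.
    have : 1 * b <= kk * b by apply: ler_wpM2r.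
    lra.
  have [S [SD Smax hcon heq hne]] := @pot_NE R n T own c f K b b01 c0.
  exists (eqc K b), S; split => //.
  rewrite principal_eqc.
  set D := [set j | own j \in K].
  have XD : Sstar :&: D \subset D by rewrite finset.subsetIr.
  have hX := Smax _ XD.
  set SK := \sum_(i in K) l i.
  have SK0 : 0 <= SK by rewrite sumr_ge0.
  have fX : SK <= f (Sstar :&: D) by rewrite /SK lK; exact: wle.
  have cX : cost c (Sstar :&: D) <= SK / (2 * kk).
    rewrite -cK.
    have : \sum_(i in K) cost c (Sstar :&: actions_of own i)
        <= \sum_(i in K) l i / (2 * kk).
      apply: ler_sum => i iK; apply: le_trans (ci i) _.
      rewrite ler_pdivlMr; last by lra.
      have h2 : (2 * kk * astar i) * l i <= 1 * l i.
        by apply: ler_wpM2r => //; exact: Ka.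
      lra.
    by rewrite -mulr_suml.
  have cS := @cost_ge0 R T c S c0.
  have fS0 : 0 <= f S by have /andP [] := f01 S.
  have key : SK <= 3 * f S.
    have e1 : b * SK <= b * f (Sstar :&: D) by apply: ler_wpM2l.
    have e2 : b * SK - SK / (2 * kk) <= b * f S by lra.
    have e3 : (4 * kk) * (b * SK - SK / (2 * kk)) <= (4 * kk) * (b * f S).
      by apply: ler_wpM2l => //; lra.
    have e4 : (4 * kk) * (b * SK - SK / (2 * kk)) = SK by rewrite /b; field.
    have e5 : (4 * kk) * (b * f S) = 3 * f S by rewrite /b; field.
    lra.
  have Kb : #|K|%:R * b <= 3 / 4.
    have hK : #|K|%:R <= kk by rewrite ler_nat.
    have : #|K|%:R * b <= kk * b by apply: ler_wpM2r.
    lra.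
  have prin : SK / 12 <= (1 - #|K|%:R * b) * f S.
    have : 1 / 4 * f S <= (1 - #|K|%:R * b) * f S by apply: ler_wpM2r => //; lra.
    lra.
  set D' := ((J + 2 * L + 2)%N%:R : R) in Drho.
  have Wle' : W <= D' * SK := Wle.
  have t1 : (1 - A) * F <= 4 * (D' * SK) by lra.
  have t2 : 1 / 240 * rho * ((1 - A) * F) <= 1 / 240 * rho * (4 * (D' * SK)).
    by apply: ler_wpM2l.
  have t3 : (D' * rho) * SK <= 5 * SK by apply: ler_wpM2r.
  lra.
have [b0 hb0] : exists b0, 1 < 2 * astar b0.
  apply: contrapT => hno.
  have allL : forall i, i \in Lt.
    move=> i; rewrite inE leNgt; apply/negP => h; apply: hno; by exists i.
  have WF : W = F by rewrite /W -lsum; apply: eq_bigl => i; rewrite allL.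
  have := mulr_ge0 A0 F0.
  lra.
have others : forall i, i != b0 -> i \in Lt.
  move=> i ib; rewrite inE.
  have h : astar i <= \sum_(j | j != b0) astar j.
    by rewrite (bigD1 i) //= lerDl sumr_ge0.
  have : A = astar b0 + \sum_(j | j != b0) astar j by rewrite /A (bigD1 b0).
  lra.
set R' := \sum_(i | i != b0) l i.
have R'W : R' <= W.
  rewrite /R' /W big_mkcond [X in _ <= X]big_mkcond /=; apply: ler_sum => i _.
  case: (eqVneq i b0) => [->|ib] /=; first by case: ifP.
  by rewrite others.
have R'0 : 0 <= R' by apply: sumr_ge0.
have FlR : F = l b0 + R' by rewrite -lsum (bigD1 b0).
have abA : astar b0 <= A by rewrite /A (bigD1 b0) //= lerDl sumr_ge0.
set bb := (1 + astar b0) / 2.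
have ab1 := a1 b0.
have ab0 := a0 b0.
have bb01 : 0 <= bb <= 1 by apply/andP; split; rewrite /bb; lra.
have [S [SD Smax hcon heq hne]] := @pot_NE R n T own c f [set b0] bb bb01 c0.
exists (eqc [set b0] bb), S; split => //.
rewrite principal_eqc cards1.
set Tb := actions_of own b0.
have STb : S \subset Tb.
  apply/fintype.subsetP => j /(fintype.subsetP SD); rewrite !inE //.
have hN := hNE b0 S STb.
rewrite /agent_util -/Tb in hN.
have S'T j : j \in S -> own j == b0.
  by move=> /(fintype.subsetP STb); rewrite inE.
have E1 : ((Sstar :\: Tb) :|: S) :&: Tb = S.
  apply/setP => j; rewrite !inE; move: (S'T j).
  by case: (j \in S); case: (j \in Sstar); case: (own j == b0) => // /(_ isT).
rewrite E1 in hN.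
have fU : f S <= f ((Sstar :\: Tb) :|: S) by apply: fmono; rewrite finset.subsetUr.
have XD : Sstar :&: Tb \subset [set j | own j \in [set b0]].
  by apply/fintype.subsetP => j; rewrite !inE => /andP [].
have hX := Smax _ XD.
have fX : l b0 <= f (Sstar :&: Tb) by exact: wle.
have bb0 : 0 <= bb by case/andP: bb01.
have p1 : bb * l b0 <= bb * f (Sstar :&: Tb) by apply: ler_wpM2l.
have p2 : astar b0 * f S <= astar b0 * f ((Sstar :\: Tb) :|: S) by apply: ler_wpM2l.
have p3 : astar b0 * R' <= 1 * R' by apply: ler_wpM2r.
have p4 : astar b0 * l b0 <= A * l b0 by apply: ler_wpM2r.
have p5 : 0 <= A * R' by apply: mulr_ge0.
set D' := ((J + 2 * L + 2)%N%:R : R) in Drho.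
have D2 : 2 <= D' by rewrite /D' ler_nat addn2.
have rho5 : 2 * rho <= D' * rho by apply: ler_wpM2r => //; exact: ltW.
have dF0 : 0 <= (1 - A) * F by lra.
have t1 : rho * ((1 - A) * F) <= (5 / 2) * ((1 - A) * F) by apply: ler_wpM2r => //; lra.
rewrite -/F FlR in hN hW t1 *.
rewrite /bb in hX p1 *.
lra.
Qed.
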